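(* Let $G$ be a coloured graph with associated linear space $\mathcal L\subseteq\mathbb S^n$, and let $\mathcal L'\subseteq\mathbb S^n$ be the linear space defined below. Let $\mathcal L^\perp\subseteq\mathbb S^n$ be the orthogonal complement of $\mathcal L$ with respect to the trace inner product $\langle M,N\rangle=\operatorname{tr}(MN)$, let $(\mathcal L^\perp)'=\mathcal L^\perp\cap\mathcal L'$, and let $S'$ be a general matrix of $\mathcal L'$. Then the ML degree of $\mathcal L$ equals the cardinality of the set $\mathcal L^{-1}\cap\big((\mathcal L^\perp)'+S'\big)$, where $(\mathcal L^\perp)'+S'=\{X'+S':X'\in(\mathcal L^\perp)'\}$.
   Context: A coloured graph is a simple undirected graph $G=(V,E)$, $V=\{1,\dots,n\}$, with a partition of $V$ and a partition of $E$ into colours $\gamma_1,\dots,\gamma_d$. For a vertex colour $\gamma_k$, $A_k$ is diagonal with $(A_k)_{ii}=1$ iff vertex $i$ has colour $\gamma_k$; for an edge colour $\gamma_k$, $A_k$ is symmetric with $(A_k)_{ij}=(A_k)_{ji}=1$ iff $\{i,j\}\in E$ has colour $\gamma_k$, all other entries $0$. The coloured adjacency matrix is $A=\sum_k\lambda_kA_k$ and $\mathcal L=\{\sum_k\lambda_kA_k:\lambda_k\in\mathbb C\}\subseteq\mathbb S^n$ (complex symmetric matrices). The reciprocal variety $\mathcal L^{-1}$ is the Zariski closure of $\{M^{-1}:M\in\mathcal L\text{ invertible}\}$, with ideal $I(\mathcal L^{-1})\subseteq\mathbb C[x_{ij}:1\le i\le j\le n]$ ($x_{ji}=x_{ij}$,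 $X=(x_{ij})$). A symmetry of $G$ is a permutation matrix $B$ with $BAB^{-1}=A$. Let $I'$ be the ideal generated by (i) all entries of $BXB^{-1}-X$ for all symmetries $B$ of $G$, and (ii) all variables $x_{ij}$ with $i,j$ in different connected components of $G$; set $\mathcal L'=V(I')\subseteq\mathbb S^n$ (a linear subspace containing $\mathcal L$). The ML degree of $\mathcal L$ is the cardinality of $\mathcal L^{-1}\cap(\mathcal L^\perp+S)$ for a general $S\in\mathbb S^n$. *)

(* Defs.v *)
From HB Require Import structures.
From mathcomp Require Import all_boot all_order all_algebra all_fingroup.
From mathcomp Require Import mpoly.
Set Implicit Arguments. Unset Strict Implicit. Unset Printing Implicit Defensive.
Import Order.TTheory GRing.Theory Num.Theory.
Local Open Scope ring_scope.

(* Every vertex gets a colour, every edge {i,j} gets a colour (ecol i j,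
   symmetric in i j, only meaningful when adj i j), and no colour is used
   both for a vertex and for an edge. *)
Record cgraph (n d : nat) := CGraph {
  cg_adj : rel 'I_n;
  cg_sym : forall i j, cg_adj i j = cg_adj j i;
  cg_irr : irreflexive cg_adj;
  cg_vcol : 'I_n -> 'I_d;
  cg_ecol : 'I_n -> 'I_n -> 'I_d;
  cg_ecol_sym : forall i j, cg_ecol i j = cg_ecol j i;
  cg_disj : forall i j k, cg_adj j k -> cg_vcol i != cg_ecol j k }.

Section Defs.
Variables (C : numClosedFieldType) (n d : nat) (G : cgraph n d).

Definition symmat (M : 'M[C]_n) : Prop := M^T = M.

Definition colmx (k : 'I_d) : 'M[C]_n :=
  \matrix_(i, j) (if i == j then (cg_vcol G i == k)%:R
                  else if cg_adj G i j then (cg_ecol G i j == k)%:R else 0).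

Definition cadj (lam : 'I_d -> C) : 'M[C]_n := \sum_k lam k *: colmx k.

Definition Lspace (M : 'M[C]_n) : Prop := exists lam, M = cadj lam.

Definition gsymmetry (B : 'M[C]_n) : Prop :=
  exists s : 'S_n, B = perm_mx s /\
    forall lam, B *m cadj lam *m invmx B = cadj lam.

Definition Lprime (X : 'M[C]_n) : Prop :=
  symmat X /\
  (forall B, gsymmetry B -> B *m X *m invmx B = X) /\
  (forall i j, ~~ connect (cg_adj G) i j -> X i j = 0).

(* coordinates of a matrix, for evaluating polynomials in the entries *)
Definition mcoords (X : 'M[C]_n) : 'I_(n * n) -> C := fun i => mxvec X 0 i.

Definition zclosure (P : 'M[C]_n -> Prop) (X : 'M[C]_n) : Prop :=
  symmat X /\
  forall f : {mpoly C[n * n]},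
    (forall Y, P Y -> f.@[mcoords Y] = 0) -> f.@[mcoords X] = 0.

Definition Lrecip : 'M[C]_n -> Prop :=
  zclosure (fun Y => exists M, Lspace M /\ M \in unitmx /\ Y = invmx M).

Definition Lperp (N : 'M[C]_n) : Prop :=
  symmat N /\ forall M, Lspace M -> \tr (M *m N) = 0.

(* P holds for a general point of the irreducible linear space V:
   on a nonempty Zariski-open subset of V *)
Definition generic (V P : 'M[C]_n -> Prop) : Prop :=
  exists f : {mpoly C[n * n]},
    (exists X, V X /\ f.@[mcoords X] != 0) /\
    forall S, V S -> f.@[mcoords S] != 0 -> P S.

Definition has_card (P : 'M[C]_n -> Prop) (m : nat) : Prop :=
  exists s : seq 'M[C]_n, uniq s /\ size s = m /\ forall X, P X <-> X \in s.

Definition MLdegree (m : nat) : Prop :=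
  generic symmat (fun S => has_card (fun X => Lrecip X /\ Lperp (X - S)) m).

End Defs.

(* Main.v *)
Require Import Defs.
From mathcomp Require Import all_boot all_order all_algebra all_fingroup.
From mathcomp Require Import mpoly.
From mathcomp Require Import ring.
Import Order.TTheory GRing.Theory Num.Theory.
Local Open Scope ring_scope.

Section Aux.
Variables (C : numClosedFieldType) (n d : nat) (G : cgraph n d).

Local Notation colmx := (@colmx C n d G).
Local Notation cadj := (@cadj C n d G).

Lemma lin_closed (P : 'M[C]_n -> Prop) (phi : 'M[C]_n -> C) (X : 'M[C]_n) :
  (forall a A B, phi (a *: A + B) = a * phi A + phi B) ->
  (forall Y, P Y -> phi Y = 0) -> zclosure P X -> phi X = 0.
Proof.
move=> lin hP [_ hX].
have phi0 : phi 0 = 0.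
  have h := lin 1 0 0; rewrite scaler0 add0r mul1r in h.
  by have := congr1 (fun x => x - phi 0) h; rewrite addrK subrr => <-.
have phiD : forall A B, phi (A + B) = phi A + phi B.
  by move=> A B; have := lin 1 A B; rewrite scale1r mul1r.
have phiZ : forall a A, phi (a *: A) = a * phi A.
  by move=> a A; rewrite -[a *: A]addr0 lin phi0 addr0.
have phiS : forall (I : finType) (F : I -> 'M[C]_n),
    phi (\sum_i F i) = \sum_i phi (F i).
  by move=> I F; apply: (big_morph phi phiD phi0).
pose f : {mpoly C[n * n]} :=
  \sum_i \sum_j (phi (delta_mx i j))%:MP * 'X_(mxvec_index i j).
have fE : forall Y, f.@[mcoords Y] = phi Y.
  move=> Y; rewrite [in RHS](matrix_sum_delta Y) phiS raddf_sum.
  apply: eq_bigr => i _; rewrite phiS raddf_sum; apply: eq_bigr => j _.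
  rewrite phiZ mulrC; apply: (etrans (mevalM _ _ _)).
  by rewrite mevalC mevalXU /mcoords mxvecE.
rewrite -fE; apply: hX => Y PY; rewrite fE; exact: hP.
Qed.

Lemma inv_comm (M D : 'M[C]_n) : M \in unitmx -> M *m D = D *m M ->
  invmx M *m D = D *m invmx M.
Proof.
move=> hu e.
rewrite -[invmx M *m D]mulmx1 -(mulmxV hu) mulmxA -(mulmxA (invmx M)) -e.
by rewrite mulmxA mulVmx // mul1mx.
Qed.

Lemma cadj_entry lam i j : cadj lam i j = \sum_k lam k * colmx k i j.
Proof. by rewrite /Defs.cadj summxE; apply: eq_bigr => k _; rewrite mxE. Qed.

Lemma colmx_sym k i j : colmx k j i = colmx k i j.
Proof.
rewrite !mxE eq_sym cg_sym cg_ecol_sym; by case: eqP => [->|].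
Qed.

Lemma colmx_props k i j : colmx k i j * colmx k i j = colmx k i j /\ 0 <= colmx k i j.
Proof.
rewrite !mxE; case: (i == j); [case: (_ == k) | case: (cg_adj G i j); [case: (_ == k)|]];
  by rewrite ?mulr1 ?mulr0 ?ler01 ?lexx.
Qed.

Lemma colmx_off k i j : ~~ connect (cg_adj G) i j -> colmx k i j = 0.
Proof.
move=> h; rewrite mxE; case: eqP => [e|_].
  by rewrite e connect0 in h.
case: ifP => // a; by rewrite connect1 in h.
Qed.

Lemma cadj_off lam i j : ~~ connect (cg_adj G) i j -> cadj lam i j = 0.
Proof.
move=> h; rewrite cadj_entry big1 // => k _; by rewrite colmx_off // mulr0.
Qed.

Lemma symmat_add (A B : 'M[C]_n) : symmat A -> symmat B -> symmat (A + B).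
Proof. by rewrite /symmat linearD /= => -> ->. Qed.

Lemma symmat_sub (A B : 'M[C]_n) : symmat A -> symmat B -> symmat (A - B).
Proof. by rewrite /symmat linearB /= => -> ->. Qed.

Lemma cadj_Lprime lam : @Lprime C n d G (cadj lam).
Proof.
split; [|split].
- rewrite /symmat; apply/matrixP => i j; rewrite mxE !cadj_entry.
  by apply: eq_bigr => k _; rewrite colmx_sym.
- by move=> B [s [_ h]].
- by move=> i j h; apply: cadj_off.
Qed.

Lemma Lprime_sub X Y : @Lprime C n d G X -> @Lprime C n d G Y -> @Lprime C n d G (X - Y).
Proof.
move=> [sX [bX cX]] [sY [bY cY]]; split; [exact: symmat_sub|split].
- by move=> B hB; rewrite mulmxBr mulmxBl bX // bY.
- by move=> i j h; rewrite !mxE cX // cY // subrr.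
Qed.

Lemma Lperp_add A B : @Lperp C n d G A -> @Lperp C n d G B -> @Lperp C n d G (A + B).
Proof.
move=> [sA hA] [sB hB]; split; first exact: symmat_add.
by move=> M hM; rewrite mulmxDr mxtraceD hA // hB // addr0.
Qed.

Lemma Lperp_sub A B : @Lperp C n d G A -> @Lperp C n d G B -> @Lperp C n d G (A - B).
Proof.
move=> [sA hA] [sB hB]; split; first exact: symmat_sub.
by move=> M hM; rewrite mulmxBr raddfB /= hA // hB // subrr.
Qed.

Lemma Lrecip_Lprime X : @Lrecip C n d G X -> @Lprime C n d G X.
Proof.
move=> hX; have [hsym _] := hX; split => //; split.
- move=> B hB; apply/matrixP => i j; apply/eqP; rewrite -subr_eq0; apply/eqP.
  apply: (lin_closed _ (fun Y => (B *m Y *m invmx B) i j - Y i j) _ _ _ hX).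
    move=> a A A'; rewrite mulmxDr mulmxDl -scalemxAr -scalemxAl !mxE; ring.
  move=> Y [M [[lam ->] [hu ->]]].
  case: hB => s [hBs hcomm].
  have Bu : B \in unitmx by rewrite hBs unitmx_perm.
  have e : cadj lam *m B = B *m cadj lam.
    by rewrite -{1}(hcomm lam) -mulmxA mulVmx // mulmx1.
  have e2 := inv_comm _ _ hu e.
  by rewrite -e2 -mulmxA mulmxV // mulmx1 subrr.
- move=> i j hij.
  apply: (lin_closed _ (fun Y => Y i j) _ _ _ hX).
    by move=> a A A'; rewrite !mxE.
  move=> Y [M [[lam ->] [hu ->]]].
  pose D : 'M[C]_n := diag_mx (\row_k (connect (cg_adj G) i k)%:R).
  have symc := sym_connect_sym (cg_sym G).
  have e : cadj lam *m D = D *m cadj lam.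
    apply/matrixP => k l; rewrite mul_mx_diag mul_diag_mx !mxE.
    case hkl: (connect (cg_adj G) k l).
      by rewrite (same_connect_r symc hkl) mulrC.
    by rewrite cadj_off ?hkl // mulr0 mul0r.
  have e2 := inv_comm _ _ hu e.
  move/matrixP: e2 => /(_ i j); rewrite mul_mx_diag mul_diag_mx !mxE.
  by rewrite (negbTE hij) connect0 mulr0 mul1r => <-.
Qed.

Lemma trAA k l : \tr (colmx k *m colmx l) = (k == l)%:R * \tr (colmx k *m colmx k).
Proof.
rewrite /mxtrace mulr_sumr; apply: eq_bigr => i _; rewrite !mxE mulr_sumr.
apply: eq_bigr => j _.
case: (eqVneq k l) => [<-|nkl]; first by rewrite mul1r.
rewrite mul0r !mxE (eq_sym j i) cg_sym cg_ecol_sym.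

case: eqP => [->|_].
  by case: eqP => [->|_]; [rewrite (negbTE nkl) mulr0 | rewrite mul0r].
case: (cg_adj G j i); last by rewrite mul0r.
by case: eqP => [->|_]; [rewrite (negbTE nkl) mulr0 | rewrite mul0r].
Qed.

Lemma colmx0 k : \tr (colmx k *m colmx k) = 0 -> colmx k = 0.
Proof.
have E : \tr (colmx k *m colmx k) = \sum_i \sum_j colmx k i j.
  rewrite /mxtrace; apply: eq_bigr => i _; rewrite !mxE; apply: eq_bigr => j _.
  by rewrite (colmx_sym k i j) (colmx_props k i j).1.
rewrite E => h; apply/matrixP => i j; rewrite [X in _ = X]mxE.
have h1 : \sum_j colmx k i j = 0.
  apply: (psumr_eq0P _ h) => // i' _.
  by apply: sumr_ge0 => j' _; exact: (colmx_props k i' j').2.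
by apply: (psumr_eq0P _ h1) => // j' _; exact: (colmx_props k i j').2.
Qed.

Lemma tr_sum (F : 'I_d -> 'M[C]_n) : \tr (\sum_i F i) = \sum_i \tr (F i).
Proof. exact: raddf_sum. Qed.

Lemma tr_sub (A B : 'M[C]_n) : \tr (A - B) = \tr A - \tr B.
Proof. exact: raddfB. Qed.

Lemma tr_cadj lam Y : \tr (cadj lam *m Y) = \sum_k lam k * \tr (colmx k *m Y).
Proof.
rewrite /Defs.cadj mulmx_suml tr_sum; apply: eq_bigr => k _.
by rewrite -scalemxAl mxtraceZ.
Qed.

Definition projc (S0 : 'M[C]_n) (k : 'I_d) : C :=
  if \tr (colmx k *m colmx k) == 0 then 0
  else \tr (colmx k *m S0) / \tr (colmx k *m colmx k).

Lemma trAT S0 k : \tr (colmx k *m cadj (projc S0)) = \tr (colmx k *m S0).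
Proof.
rewrite /Defs.cadj mulmx_sumr tr_sum (bigD1 k) //= big1 ?addr0.
  rewrite -scalemxAr mxtraceZ trAA eqxx mul1r /projc.
  case: eqP => [h|h]; last by rewrite divfK //; apply/eqP.
  by rewrite mul0r colmx0 // mul0mx mxtrace0.
move=> l nlk; rewrite -scalemxAr mxtraceZ trAA eq_sym (negbTE nlk).
by rewrite mul0r mulr0.
Qed.

Lemma K0_perp S0 : symmat S0 -> @Lperp C n d G (S0 - cadj (projc S0)).
Proof.
move=> hS; split.
  by apply: symmat_sub => //; case: (cadj_Lprime (projc S0)).
move=> M [lam ->]; rewrite tr_cadj big1 // => k _.
by rewrite mulmxBr tr_sub trAT subrr mulr0.
Qed.

End Aux.
Arguments symmat_add {C n A B}.
Arguments Lperp_add {C n d G A B}.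
Arguments Lperp_sub {C n d G A B}.
Arguments Lprime_sub {C n d G X Y}.
Arguments Lrecip_Lprime {C n d G X}.

Theorem mainTheorem3 (C : numClosedFieldType) (n d : nat) (G : cgraph n d)
  (m : nat) :
  @MLdegree C n d G m ->
  generic (@Lprime C n d G)
    (fun S' => has_card
       (fun X => @Lrecip C n d G X /\ (@Lperp C n d G (X - S') /\ @Lprime C n d G (X - S'))) m).
Proof.
move=> [f [[S0 [hS0 hfS0]] hf]].
set T := @Defs.cadj C n d G (@projc C n d G S0).
set K0 := S0 - T.
have hK : @Lperp C n d G K0 := @K0_perp C n d G S0 hS0.
pose lq := [tuple 'X_i + (mcoords K0 i)%:MP | i < n * n].
have gE : forall Y, (f \mPo lq).@[mcoords Y] = f.@[mcoords (Y + K0)].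
  move=> Y; rewrite comp_mpoly_meval; apply: meval_eq => i.
  rewrite tnth_mktuple; apply: (etrans (mevalD _ _ _)).
  rewrite mevalXU mevalC /mcoords. case/mxvec_indexP: i => k l. rewrite !mxvecE. symmetry; exact: mxE.
exists (f \mPo lq); split.
  exists T; split; first exact: cadj_Lprime.
  by rewrite gE /K0 addrC subrK.
move=> S' hS' hg; clearbody K0.
have hS : symmat (S' + K0) := symmat_add hS'.1 hK.1.
have [s [us [sz hs]]] := hf _ hS (eq_ind _ (fun x => x != 0) hg _ (gE S')).
exists s; split => //; split => // X; rewrite -hs; split.
- move=> [hR [hP _]]; split => //.
  by have := Lperp_sub hP hK; rewrite opprD addrA.
- move=> [hR hP]; split => //; split.
    by have := Lperp_add hP hK; rewrite opprD addrA subrK.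
  exact: Lprime_sub (Lrecip_Lprime hR) hS'.
Qed.
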